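(* Let $\mathcal{R}$ be a left-linear TRS. If there is a confluent TRS $\mathcal{C}\subseteq\mathcal{R}$ such that $t\leftrightarrow^*_\mathcal{C} u$ for every parallel critical pair $(t,u)$ between $\mathcal{R}$ and $\mathcal{R}$, then $\mathcal{R}$ is confluent.
   Context: A TRS is a set of rules $\ell\to r$ with $\ell\notin\mathcal{V}$, $\mathcal{V}ar(r)\subseteq\mathcal{V}ar(\ell)$; left-linear: no variable occurs twice in a left-hand side; confluent: ${}_\mathcal{R}\!\!\leftarrow^*\cdot\to_\mathcal{R}^*\subseteq\to_\mathcal{R}^*\cdot{}_\mathcal{R}\!\!\leftarrow^*$; $\leftrightarrow^*_\mathcal{C}$ is the reflexive-transitive-symmetric closure of $\to_\mathcal{C}$. Positions $p,q$ are parallel if neither is a prefix of the other; $\mathcal{P}os_\mathcal{F}(\ell)$ denotes the function-symbol positions of $\ell$; $\epsilon$ is the root. Parallel critical pair between $\mathcal{R}$ and $\mathcal{S}$: let $\ell\to r$ be a variant (renaming) of an $\mathcal{S}$-rule, $P\subseteq\mathcal{P}os_\mathcal{F}(\ell)$ a non-empty set of pairwise parallel positions, $\ell_p\to r_p$ ($p\in P$) variants of $\mathcal{R}$-rules, all these rules pairwise variable-disjoint, $\sigma$ a most general unifier of $\{\ell_p\approx\ell|_p\}_{p\in P}$, and if $P=\{\epsilon\}$ then $\ell_\epsilon\to r_\epsilon$ is not a variant of $\ell\to r$. Then $((\ell\sigma)[r_p\sigma]_{p\in P}, r\sigma)$ is a parallel critical pair. *)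

(* Defs.v *)
From Stdlib Require Import List Relations.
Import ListNotations.
Set Implicit Arguments.

Section Terms.
Variables F V : Type.

(* First-order terms (unranked: a symbol applied to any list of arguments). *)
Inductive term : Type :=
| Var : V -> term
| Fun : F -> list term -> term.

Fixpoint vars (t : term) : list V :=
  match t with
  | Var x => [x]
  | Fun _ ts =>
      (fix go (l : list term) : list V :=
         match l with nil => nil | u :: l' => vars u ++ go l' end) ts
  end.

Definition subst := V -> term.

Fixpoint apply_subst (s : subst) (t : term) : term :=
  match t with
  | Var x => s x
  | Fun f ts => Fun f (map (apply_subst s) ts)
  end.

(* Positions: sequences of (0-based) argument indices; [] is the root. *)
Definition pos := list nat.

Fixpoint subterm_at (t : term) (p : pos) : option term :=
  match p with
  | nil => Some t
  | i :: p' =>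
      match t with
      | Var _ => None
      | Fun _ ts =>
          match nth_error ts i with
          | Some ti => subterm_at ti p' | None => None
          end
      end
  end.

(* t[s]_p (t unchanged if p is not a position of t). *)
Fixpoint replace_at (t : term) (p : pos) (s : term) : term :=
  match p with
  | nil => s
  | i :: p' =>
      match t with
      | Var x => Var x
      | Fun f ts =>
          Fun f ((fix upd (l : list term) (k : nat) : list term :=
                    match l, k with
                    | nil, _ => nil
                    | u :: l', 0 => replace_at u p' s :: l'
                    | u :: l', S k' => u :: upd l' k'
                    end) ts i)
      end
  end.

Definition prefix (p q : pos) : Prop := exists r, q = p ++ r.
Definition parallel (p q : pos) : Prop := ~ prefix p q /\ ~ prefix q p.

Definition fun_pos (t : term) (p : pos) : Prop :=
  exists f ts, subterm_at t p = Some (Fun f ts).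

Definition rule := (term * term)%type.
Definition trs := rule -> Prop.

Definition rule_vars (rl : rule) : list V := vars (fst rl) ++ vars (snd rl).

Definition is_trs (R : trs) : Prop :=
  forall l r, R (l, r) ->
    (exists f ts, l = Fun f ts) /\ (forall x, In x (vars r) -> In x (vars l)).

Definition left_linear (R : trs) : Prop :=
  forall l r, R (l, r) -> NoDup (vars l).

Definition sub_trs (C R : trs) : Prop := forall rl, C rl -> R rl.

Definition rstep (R : trs) (s t : term) : Prop :=
  exists l r (sg : subst) p,
    R (l, r) /\ subterm_at s p = Some (apply_subst sg l) /\
    t = replace_at s p (apply_subst sg r).

Definition rsteps (R : trs) : relation term := clos_refl_trans term (rstep R).
Definition conv (R : trs) : relation term := clos_refl_sym_trans term (rstep R).

Definition confluent (R : trs) : Prop :=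
  forall s t u, rsteps R s t -> rsteps R s u ->
    exists v, rsteps R t v /\ rsteps R u v.

Definition renaming (pi : V -> V) : Prop :=
  exists pinv : V -> V, (forall x, pinv (pi x) = x) /\ (forall x, pi (pinv x) = x).

Definition variant (rl rl' : rule) : Prop :=
  exists pi, renaming pi /\
    fst rl' = apply_subst (fun x => Var (pi x)) (fst rl) /\
    snd rl' = apply_subst (fun x => Var (pi x)) (snd rl).

Definition variant_of (R : trs) (rl : rule) : Prop :=
  exists rl0, R rl0 /\ variant rl0 rl.

Definition var_disjoint (a b : rule) : Prop :=
  forall x, In x (rule_vars a) -> ~ In x (rule_vars b).

Definition unifies (l : term) (ps : list (pos * rule)) (tau : subst) : Prop :=
  forall p rl, In (p, rl) ps ->
    exists lsub, subterm_at l p = Some lsub /\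
                 apply_subst tau (fst rl) = apply_subst tau lsub.

Definition is_mgu (l : term) (ps : list (pos * rule)) (sg : subst) : Prop :=
  unifies l ps sg /\
  forall tau, unifies l ps tau ->
    exists delta : subst, forall x, tau x = apply_subst delta (sg x).

Definition multi_replace (sg : subst) (t : term) (ps : list (pos * rule)) : term :=
  fold_left (fun acc pr => replace_at acc (fst pr) (apply_subst sg (snd (snd pr)))) ps t.

Definition pcp (R S : trs) (t u : term) : Prop :=
  exists (l r : term) (ps : list (pos * rule)) (sg : subst),
    variant_of S (l, r) /\
    ps <> nil /\
    NoDup (map fst ps) /\
    (forall p, In p (map fst ps) -> fun_pos l p) /\
    (forall p q, In p (map fst ps) -> In q (map fst ps) -> p <> q -> parallel p q) /\
    (forall p rl, In (p, rl) ps -> variant_of R rl) /\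
    (forall p rl, In (p, rl) ps -> var_disjoint rl (l, r)) /\
    (forall p q rlp rlq, In (p, rlp) ps -> In (q, rlq) ps -> p <> q ->
        var_disjoint rlp rlq) /\
    is_mgu l ps sg /\
    (forall rl, ps = [(nil, rl)] -> ~ variant rl (l, r)) /\
    t = multi_replace sg (apply_subst sg l) ps /\
    u = apply_subst sg r.

End Terms.

Arguments Var {F V} _.
Arguments Fun {F V} _ _.

(* Main.v *)
Require Import Defs.
From Stdlib Require Import List Relations Arith Lia Classical ClassicalEpsilon.
Import ListNotations.
Set Implicit Arguments.


Section Basics.
Context {F V : Type}.
Local Notation term := (term F V).
Local Notation subst := (subst F V).

Definition veq (x y : V) : {x = y} + {x <> y} := excluded_middle_informative _.

Definition term_ind2 (P : term -> Prop) (Hv : forall x, P (Var x))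
  (Hf : forall f ts, Forall P ts -> P (Fun f ts)) : forall t, P t :=
  fix rec t := match t with
  | Var x => Hv x
  | Fun f ts => Hf f ts ((fix go l : Forall P l := match l with
        | [] => Forall_nil _ | u :: l' => Forall_cons _ (rec u) (go l') end) ts)
  end.

Lemma vars_Fun f ts : vars (Fun f ts) = flat_map (@vars F V) ts.
Proof. induction ts; simpl; auto. Qed.

Lemma apply_Fun (s : subst) f ts : apply_subst s (Fun f ts) = Fun f (map (apply_subst s) ts).
Proof. reflexivity. Qed.

Lemma subst_ext (s1 s2 : subst) t :
  (forall x, In x (vars t) -> s1 x = s2 x) -> apply_subst s1 t = apply_subst s2 t.
Proof.
  induction t using term_ind2; intros Hs; simpl.
  - apply Hs; simpl; auto.
  - f_equal. rewrite vars_Fun in Hs. induction H; simpl; auto.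
    simpl in Hs. f_equal.
    + apply H. intros; apply Hs; apply in_or_app; auto.
    + apply IHForall. intros; apply Hs. apply in_or_app; auto.
Qed.

Lemma subst_ext_inv (s1 s2 : subst) t :
  apply_subst s1 t = apply_subst s2 t -> forall x, In x (vars t) -> s1 x = s2 x.
Proof.
  induction t using term_ind2; intros Hs y Hy.
  - simpl in *. destruct Hy as [<-|[]]; auto.
  - rewrite vars_Fun in Hy. simpl in Hs. injection Hs as Hs.
    induction H; simpl in *. destruct Hy.
    injection Hs as H1 H2. apply in_app_or in Hy as [Hy|Hy]; eauto.
Qed.

Lemma subst_comp (s d : subst) t :
  apply_subst d (apply_subst s t) = apply_subst (fun x => apply_subst d (s x)) t.
Proof.
  induction t using term_ind2; simpl; auto.
  f_equal. rewrite map_map. induction H; simpl; f_equal; auto.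
Qed.

Lemma subst_id t : apply_subst (@Var F V) t = t.
Proof.
  induction t using term_ind2; simpl; auto.
  f_equal. induction H; simpl; f_equal; auto.
Qed.

Lemma vars_subst (s : subst) t x :
  In x (vars (apply_subst s t)) <-> exists y, In y (vars t) /\ In x (vars (s y)).
Proof.
  induction t using term_ind2.
  - simpl. split; [intros; exists x0; simpl; auto | intros [y [[<-|[]] Hy]]; auto].
  - rewrite apply_Fun, !vars_Fun. induction H; simpl.
    + split; [intros []| intros [y [[] _]]].
    + rewrite !in_app_iff, IHForall, H. split.
      * intros [[y [H1 H2]]|[y [H1 H2]]]; exists y; rewrite in_app_iff; auto.
      * intros [y [H1 H2]]; rewrite in_app_iff in H1; destruct H1; eauto.
Qed.

Lemma vars_rename (pi : V -> V) (t : term) :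
  vars (apply_subst (fun x => Var (pi x)) t) = map pi (vars t).
Proof.
  induction t using term_ind2; auto.
  rewrite apply_Fun, !vars_Fun. induction H; simpl; auto.
  rewrite map_app, H, IHForall; reflexivity.
Qed.

End Basics.

Section Pos.
Context {F V : Type}.
Local Notation term := (term F V).
Local Notation subst := (subst F V).

Fixpoint upd (g : term -> term) (l : list term) (k : nat) : list term :=
  match l, k with
  | [], _ => []
  | u :: l', 0 => g u :: l'
  | u :: l', S k' => u :: upd g l' k'
  end.

Lemma replace_Fun f ts i p (s : term) :
  replace_at (Fun f ts) (i :: p) s = Fun f (upd (fun u => replace_at u p s) ts i).
Proof. simpl. f_equal. revert i; induction ts; intros [|i]; simpl; auto. f_equal; auto. Qed.

Lemma replace_nil t (s : term) : replace_at t [] s = s.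
Proof. destruct t; reflexivity. Qed.

Lemma nth_error_upd g l k j :
  nth_error (upd g l k) j = if Nat.eq_dec k j then option_map g (nth_error l k) else nth_error l j.
Proof.
  revert k j; induction l; intros [|k] [|j]; simpl; try rewrite IHl;
  repeat destruct Nat.eq_dec; simpl; auto; try lia.
Qed.

Lemma upd_upd g1 g2 l k : upd g2 (upd g1 l k) k = upd (fun u => g2 (g1 u)) l k.
Proof. revert k; induction l; intros [|k]; simpl; f_equal; auto. Qed.

Lemma upd_app g pre a post : upd g (pre ++ a :: post) (length pre) = pre ++ g a :: post.
Proof. induction pre; simpl; f_equal; auto. Qed.

Lemma map_upd (h : term -> term) g g' l k :
  (forall u, nth_error l k = Some u -> h (g u) = g' (h u)) ->
  map h (upd g l k) = upd g' (map h l) k.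
Proof.
  revert k; induction l; intros [|k] H; simpl in *; auto; f_equal; auto.
Qed.

Lemma subterm_subst (s : subst) t p u :
  subterm_at t p = Some u -> subterm_at (apply_subst s t) p = Some (apply_subst s u).
Proof.
  revert t; induction p as [|i p IH]; intros t H; simpl in *.
  - congruence.
  - destruct t as [x|f ts]; [discriminate|].
    simpl. rewrite nth_error_map. destruct (nth_error ts i); simpl; [apply IH; auto|discriminate].
Qed.

Lemma replace_subst (s : subst) t p u :
  subterm_at t p <> None ->
  apply_subst s (replace_at t p u) = replace_at (apply_subst s t) p (apply_subst s u).
Proof.
  revert t; induction p as [|i p IH]; intros t H; [rewrite !replace_nil; reflexivity|].
  destruct t as [x|f ts]; [simpl in H; congruence|].
  rewrite replace_Fun, apply_Fun, apply_Fun, replace_Fun. f_equal.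
  apply map_upd. intros v Hv. apply IH. simpl in H. rewrite Hv in H. auto.
Qed.

Lemma subterm_vars (t : term) p u : subterm_at t p = Some u -> incl (vars u) (vars t).
Proof.
  revert t; induction p as [|i p IH]; intros t H; simpl in *.
  - injection H as <-. apply incl_refl.
  - destruct t as [x|f ts]; [discriminate|].
    destruct (nth_error ts i) eqn:E; [|discriminate].
    intros y Hy. rewrite vars_Fun. apply in_flat_map. exists t.
    split; [eapply nth_error_In; eauto | eapply IH; eauto].
Qed.

Lemma parallel_nil_l q : ~ parallel [] q.
Proof. intros [H _]. apply H. exists q. reflexivity. Qed.
Lemma parallel_nil_r q : ~ parallel q [].
Proof. intros [_ H]. apply H. exists q. reflexivity. Qed.

Lemma parallel_cons_same i p q : parallel (i :: p) (i :: q) <-> parallel p q.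
Proof.
  unfold parallel, prefix. split; intros [H1 H2]; split; intros [r Hr].
  - apply H1. exists r. simpl. congruence.
  - apply H2. exists r. simpl. congruence.
  - apply H1. exists r. simpl in Hr. congruence.
  - apply H2. exists r. simpl in Hr. congruence.
Qed.

Lemma parallel_cons_diff i j p q : i <> j -> parallel (i :: p) (j :: q).
Proof.
  unfold parallel, prefix. intros H; split; intros [r Hr]; simpl in Hr; congruence.
Qed.

Lemma parallel_sym p q : parallel p q -> parallel q p.
Proof. unfold parallel; tauto. Qed.

Lemma subterm_replace_par t p q (s : term) :
  parallel p q -> subterm_at (replace_at t p s) q = subterm_at t q.
Proof.
  revert t q; induction p as [|i p IH]; intros t q Hpq.
  - exfalso; eapply parallel_nil_l; eauto.
  - destruct q as [|j q]; [exfalso; eapply parallel_nil_r; eauto|].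
    destruct t as [x|f ts]; [reflexivity|].
    rewrite replace_Fun. simpl. rewrite nth_error_upd.
    destruct (Nat.eq_dec i j) as [<-|Hne]; auto.
    destruct (nth_error ts i); simpl; auto.
    apply IH. apply parallel_cons_same in Hpq; auto.
Qed.

Definition mrep {A : Type} (val : A -> term) (ps : list (pos * A)) (t : term) : term :=
  fold_left (fun acc e => replace_at acc (fst e) (val (snd e))) ps t.

Lemma multi_replace_mrep (sg : subst) t (ps : list (pos * rule F V)) :
  multi_replace sg t ps = mrep (fun rl => apply_subst sg (snd rl)) ps t.
Proof. reflexivity. Qed.

Definition PW (l : list pos) := forall p q, In p l -> In q l -> p <> q -> parallel p q.

Lemma PW_tail a l : PW (a :: l) -> PW l.
Proof. intros H p q Hp Hq; apply H; simpl; auto. Qed.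

Lemma mrep_subst {A} (val : A -> term) (d : subst) ps t :
  (forall p a, In (p, a) ps -> subterm_at t p <> None) ->
  NoDup (map fst ps) -> PW (map fst ps) ->
  apply_subst d (mrep val ps t) = mrep (fun a => apply_subst d (val a)) ps (apply_subst d t).
Proof.
  unfold mrep. revert t; induction ps as [|[p a] ps IH]; intros t Hv Hnd Hpw; simpl; auto.
  simpl in Hnd. inversion Hnd; subst.
  rewrite IH.
  - f_equal. apply replace_subst. eapply Hv; simpl; eauto.
  - intros q b Hq. rewrite subterm_replace_par. eapply Hv; simpl; eauto.
    apply Hpw; simpl; auto. right. apply in_map_iff. exists (q,b); auto.
    intros ->. apply H1. apply in_map_iff. exists (q,b); auto.
  - auto.
  - eapply PW_tail; eauto.
Qed.

Lemma mrep_F2 {A B} (va : A -> term) (vb : B -> term) l1 l2 t :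
  Forall2 (fun e1 e2 => fst e1 = fst e2 /\ va (snd e1) = vb (snd e2)) l1 l2 ->
  mrep va l1 t = mrep vb l2 t.
Proof.
  unfold mrep. intros H; revert t; induction H as [|[p a] [q b] l1 l2 [H1 H2] H IH];
  intros t; simpl in *; auto. subst. rewrite H2. apply IH.
Qed.

Lemma mrep_cons0 {A} (val : A -> term) i (ps : list (pos * A)) f ts :
  mrep val (map (fun e => (i :: fst e, snd e)) ps) (Fun f ts) =
  Fun f (upd (mrep val ps) ts i).
Proof.
  unfold mrep. revert ts; induction ps as [|[p a] ps IH]; intros ts; cbn [map fold_left fst snd].
  - f_equal. revert i; induction ts; intros [|i]; simpl; f_equal; auto.
  - rewrite replace_Fun, IH, upd_upd. reflexivity.
Qed.

Definition shiftp (p : pos) : pos := match p with [] => [] | i :: q => S i :: q end.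

Lemma mrep_shift {A} (val : A -> term) (ps : list (pos * A)) f a ts us :
  (forall e, In e ps -> fst e <> []) ->
  mrep val ps (Fun f ts) = Fun f us ->
  mrep val (map (fun e => (shiftp (fst e), snd e)) ps) (Fun f (a :: ts)) = Fun f (a :: us).
Proof.
  unfold mrep. revert ts; induction ps as [|[p b] ps IH]; intros ts Hne H;
  cbn [map fold_left fst snd] in *.
  - congruence.
  - destruct p as [|i q]. exfalso; eapply (Hne (nil, b)); simpl; auto.
    cbn [shiftp]. rewrite replace_Fun in *.
    replace (upd (fun u => replace_at u q (val b)) (a :: ts) (S i)) with
      (a :: upd (fun u => replace_at u q (val b)) ts i) by reflexivity.
    apply IH; auto. intros e He; apply Hne; simpl; auto.
Qed.

End Pos.

Section Par.
Context {F V : Type}.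
Local Notation term := (term F V).
Local Notation subst := (subst F V).

Inductive par (B : trs F V) : term -> term -> Prop :=
| par_var x : par B (Var x) (Var x)
| par_fun f ts us : pars B ts us -> par B (Fun f ts) (Fun f us)
| par_root l r (sg : subst) : B (l, r) -> par B (apply_subst sg l) (apply_subst sg r)
with pars (B : trs F V) : list term -> list term -> Prop :=
| pars_nil : pars B [] []
| pars_cons t u ts us : par B t u -> pars B ts us -> pars B (t :: ts) (u :: us).

Scheme par_mut := Induction for par Sort Prop with pars_mut := Induction for pars Sort Prop.

Lemma pars_F2 B ts us : pars B ts us <-> Forall2 (par B) ts us.
Proof.
  split; intros H; induction H; constructor; auto.
Qed.

Lemma par_refl B (t : term) : par B t t.
Proof.
  induction t using term_ind2; constructor.
  induction H; constructor; auto.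
Qed.

Lemma pars_refl B (ts : list term) : pars B ts ts.
Proof. induction ts; constructor; auto using par_refl. Qed.

Lemma par_subst B (s s' : subst) t :
  (forall x, par B (s x) (s' x)) -> par B (apply_subst s t) (apply_subst s' t).
Proof.
  intros Hs. induction t using term_ind2; simpl; auto.
  constructor. induction H; simpl; constructor; auto.
Qed.

Lemma pars_upd B g ts i :
  (forall u, nth_error ts i = Some u -> par B u (g u)) -> pars B ts (upd g ts i).
Proof.
  revert i; induction ts; intros [|i] H; simpl in *; constructor; auto using par_refl, pars_refl.
Qed.

Lemma rstep_par B (s t : term) : rstep B s t -> par B s t.
Proof.
  intros (l & r & sg & p & HB & Hs & Ht). subst t.
  revert s Hs; induction p as [|i p IH]; intros s Hs.
  - simpl in Hs. injection Hs as ->. rewrite replace_nil. constructor; auto.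
  - destruct s as [x|f ts]; [discriminate|].
    rewrite replace_Fun. constructor. apply pars_upd.
    intros u Hu. simpl in Hs. rewrite Hu in Hs. auto.
Qed.

Lemma rstep_ctx (B : trs F V) f pre (a b : term) post :
  rstep B a b -> rstep B (Fun f (pre ++ a :: post)) (Fun f (pre ++ b :: post)).
Proof.
  intros (l & r & sg & p & HB & Hs & Ht). exists l, r, sg, (length pre :: p).
  split; auto. split.
  - simpl. rewrite nth_error_app2, Nat.sub_diag by lia. simpl. auto.
  - rewrite replace_Fun, upd_app. congruence.
Qed.

Lemma rsteps_ctx (B : trs F V) f pre (a b : term) post :
  rsteps B a b -> rsteps B (Fun f (pre ++ a :: post)) (Fun f (pre ++ b :: post)).
Proof.
  induction 1.
  - apply rt_step. apply rstep_ctx; auto.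
  - apply rt_refl.
  - eapply rt_trans; eauto.
Qed.

Lemma conv_ctx (B : trs F V) f pre (a b : term) post :
  conv B a b -> conv B (Fun f (pre ++ a :: post)) (Fun f (pre ++ b :: post)).
Proof.
  induction 1.
  - apply rst_step. apply rstep_ctx; auto.
  - apply rst_refl.
  - apply rst_sym; auto.
  - eapply rst_trans; eauto.
Qed.

Lemma rsteps_args (B : trs F V) f ts us :
  Forall2 (rsteps B) ts us -> rsteps B (Fun f ts) (Fun f us).
Proof.
  intros H. change ts with ([] ++ ts). change us with ([] ++ us). generalize (@nil term).
  induction H; intros pre.
  - apply rt_refl.
  - eapply rt_trans. apply rsteps_ctx; eauto.
    specialize (IHForall2 (pre ++ [y])). rewrite <- !app_assoc in IHForall2. auto.
Qed.

Lemma conv_args (B : trs F V) f ts us :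
  Forall2 (conv B) ts us -> conv B (Fun f ts) (Fun f us).
Proof.
  intros H. change ts with ([] ++ ts). change us with ([] ++ us). generalize (@nil term).
  induction H; intros pre.
  - apply rst_refl.
  - eapply rst_trans. apply conv_ctx; eauto.
    specialize (IHForall2 (pre ++ [y])). rewrite <- !app_assoc in IHForall2. auto.
Qed.

Lemma par_rsteps B (s t : term) : par B s t -> rsteps B s t.
Proof.
  revert s t.
  apply (@par_mut B (fun s t _ => rsteps B s t) (fun ts us _ => Forall2 (rsteps B) ts us));
    intros; auto.
  - apply rt_refl.
  - apply rsteps_args; auto.
  - apply rt_step. exists l, r, sg, []. split; auto. split; auto. rewrite replace_nil; auto.
Qed.

Lemma rstep_subst B (d : subst) (a b : term) : rstep B a b -> rstep B (apply_subst d a) (apply_subst d b).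
Proof.
  intros (l & r & sg & p & HB & Hs & Ht). subst b.
  exists l, r, (fun x => apply_subst d (sg x)), p. split; auto. split.
  - rewrite <- subst_comp. apply subterm_subst; auto.
  - rewrite replace_subst by congruence. rewrite subst_comp. auto.
Qed.

Lemma conv_subst B (d : subst) (a b : term) : conv B a b -> conv B (apply_subst d a) (apply_subst d b).
Proof.
  induction 1.
  - apply rst_step. apply rstep_subst; auto.
  - apply rst_refl.
  - apply rst_sym; auto.
  - eapply rst_trans; eauto.
Qed.

Lemma rsteps_mono (C R : trs F V) (a b : term) : sub_trs C R -> rsteps C a b -> rsteps R a b.
Proof.
  intros HCR. induction 1.
  - apply rt_step. destruct H as (l & r & sg & p & HB & Hs & Ht). exists l, r, sg, p; auto.
  - apply rt_refl.
  - eapply rt_trans; eauto.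
Qed.

Lemma rsteps_conv B (a b : term) : rsteps B a b -> conv B a b.
Proof.
  induction 1; [apply rst_step; auto | apply rst_refl | eapply rst_trans; eauto].
Qed.

End Par.

Section Dec.
Context {F V : Type}.
Local Notation term := (term F V).
Local Notation subst := (subst F V).

Lemma NoDup_app_disj {A} (l1 l2 : list A) a : NoDup (l1 ++ l2) -> In a l1 -> ~ In a l2.
Proof.
  induction l1; simpl; intros H H1; [destruct H1|].
  inversion H; subst. destruct H1 as [<-|H1]; auto.
  intros H2. apply H3. apply in_or_app; auto.
Qed.

Lemma NoDup_map_inj {A B} (f : A -> B) l :
  (forall x y, In x l -> In y l -> f x = f y -> x = y) -> NoDup l -> NoDup (map f l).
Proof.
  induction l; simpl; intros Hi Hn; constructor; inversion Hn; subst.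
  - intros Hin. apply in_map_iff in Hin as [y [Hy1 Hy2]].
    assert (y = a) by (apply Hi; auto). subst; auto.
  - apply IHl; auto.
Qed.

Lemma prefix_cons (a b : nat) p q : prefix (a :: p) (b :: q) <-> a = b /\ prefix p q.
Proof.
  unfold prefix; split.
  - intros [r Hr]. simpl in Hr. injection Hr as -> ->. eauto.
  - intros [-> [r ->]]. exists r. reflexivity.
Qed.

Lemma parallel_shift i j p q : parallel (i :: p) (j :: q) -> parallel (S i :: p) (S j :: q).
Proof.
  unfold parallel. rewrite !prefix_cons. intros [H1 H2]; split; intros [H3 H4]; auto.
Qed.

Lemma mrep_app {A} (v : A -> term) a b t : mrep v (a ++ b) t = mrep v b (mrep v a t).
Proof. unfold mrep. apply fold_left_app. Qed.

Definition dval (e : rule F V * subst) : term := apply_subst (snd e) (snd (fst e)).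

Definition DecP (B : trs F V) (l : term) (s : subst) (u : term)
  (qs : list (pos * (rule F V * subst))) (s' : subst) : Prop :=
  (forall p rl th, In (p, (rl, th)) qs -> B rl /\ exists lsub, subterm_at l p = Some lsub /\
       (exists f ts, lsub = Fun f ts) /\ apply_subst s lsub = apply_subst th (fst rl) /\
       (forall x, In x (vars lsub) -> s' x = s x)) /\
  NoDup (map fst qs) /\ PW (map fst qs) /\
  (forall x, par B (s x) (s' x)) /\
  (forall x, ~ In x (vars l) -> s' x = s x) /\
  u = mrep dval qs (apply_subst s' l).

Lemma par_Fun_inv B f ts (u : term) :
  par B (Fun f ts) u ->
  (exists us, u = Fun f us /\ pars B ts us) \/
  (exists l r (th : subst), B (l, r) /\ Fun f ts = apply_subst th l /\ u = apply_subst th r).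
Proof.
  intros H. remember (Fun f ts) as s0. destruct H.
  - discriminate.
  - injection Heqs0 as -> ->. left; eauto.
  - right. eauto 6.
Qed.

Lemma DECL B f (ls : list term) :
  Forall (fun l => NoDup (vars l) -> forall (s : subst) u, par B (apply_subst s l) u ->
            exists qs s', DecP B l s u qs s') ls ->
  NoDup (flat_map (@vars F V) ls) -> forall (s : subst) us, pars B (map (apply_subst s) ls) us ->
  exists qs s', DecP B (Fun f ls) s (Fun f us) qs s' /\ (forall e, In e qs -> fst e <> []).
Proof.
  intros Hall. induction Hall as [|l ls' Hl Hall IH]; intros Hnd s us Hp.
  - inversion Hp; subst. exists [], s. split; [|intros _ []].
    split; [intros p rl th []|]. split; [constructor|]. split; [intros p q []|].
    split; [intros; apply par_refl|]. split; auto.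
  - simpl in Hp. inversion Hp as [|t0 u0 ts0 us' Hp0 Hps]; subst.
    simpl in Hnd.
    assert (Hndl : NoDup (vars l)) by (eapply NoDup_app_remove_r; eauto).
    assert (Hndr : NoDup (flat_map (@vars F V) ls')) by (eapply NoDup_app_remove_l; eauto).
    assert (Hdisj : forall x, In x (vars l) -> ~ In x (flat_map (@vars F V) ls'))
      by (intros; eapply NoDup_app_disj; eauto).
    destruct (Hl Hndl s u0 Hp0) as (qs0 & s0' & D1 & D2 & D3 & D4 & D5 & D6).
    destruct (IH Hndr s us' Hps) as (qs1 & s1' & (E1 & E2 & E3 & E4 & E5 & E6) & Ene).
    set (s' := fun x => if in_dec veq x (vars l) then s0' x else s1' x).
    exists (map (fun e => (0 :: fst e, snd e)) qs0 ++ map (fun e => (shiftp (fst e), snd e)) qs1), s'.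
    assert (Hs'l : forall x, In x (vars l) -> s' x = s0' x).
    { intros x Hx. unfold s'. destruct in_dec; tauto. }
    assert (Hs'r : forall x, ~ In x (vars l) -> s' x = s1' x).
    { intros x Hx. unfold s'. destruct in_dec; tauto. }
    split; [split; [|split; [|split; [|split; [|split]]]]|].
    + intros p rl th Hin. apply in_app_or in Hin as [Hin|Hin];
        apply in_map_iff in Hin as [[q [rl' th']] [Heq Hin]]; simpl in Heq; injection Heq as <- -> ->.
      * destruct (D1 _ _ _ Hin) as [HB (lsub & Hsub & Hf & Heq & Hx)]. split; auto.
        exists lsub. simpl. repeat split; auto.
        intros x Hxl. rewrite Hs'l; auto. eapply subterm_vars; eauto.
      * destruct (E1 _ _ _ Hin) as [HB (lsub & Hsub & Hf & Heq & Hx)]. split; auto.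
        destruct q as [|i q]. { exfalso; eapply (Ene (nil, (rl, th))); eauto. }
        exists lsub. split; [exact Hsub|]. repeat split; auto.
        intros x Hxl. assert (Hxr : In x (flat_map (@vars F V) ls')).
        { rewrite <- vars_Fun with (f := f). eapply subterm_vars with (p := i :: q); [exact Hsub | exact Hxl]. }
        rewrite Hs'r. auto. intros Hxl'. eapply Hdisj; eauto.
    + rewrite map_app, !map_map. simpl. apply NoDup_app.
      * rewrite <- (map_map fst (cons 0)). apply NoDup_map_inj; auto. intros x y _ _ H; congruence.
      * rewrite <- (map_map fst shiftp). apply NoDup_map_inj; auto.
        intros x y Hx Hy H. apply in_map_iff in Hx as [ex [<- Hex]]. apply in_map_iff in Hy as [ey [<- Hey]].
        pose proof (Ene _ Hex). pose proof (Ene _ Hey).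
        destruct (fst ex), (fst ey); simpl in *; congruence.
      * intros a Ha Hb. apply in_map_iff in Ha as [ea [<- _]]. apply in_map_iff in Hb as [eb [Hb Heb]].
        specialize (Ene _ Heb). destruct (fst eb); simpl in *; congruence.
    + intros p q Hp1 Hq1 Hpq. rewrite map_app, !map_map in Hp1, Hq1. simpl in Hp1, Hq1.
      apply in_app_or in Hp1 as [Hp1|Hp1]; apply in_app_or in Hq1 as [Hq1|Hq1];
        apply in_map_iff in Hp1 as [ep [<- Hep]]; apply in_map_iff in Hq1 as [eq [<- Heq]].
      * apply parallel_cons_same. apply D3; try (apply in_map; auto). congruence.
      * specialize (Ene _ Heq). destruct (fst eq); [congruence|]. apply parallel_cons_diff. lia.
      * specialize (Ene _ Hep). destruct (fst ep); [congruence|]. apply parallel_cons_diff. lia.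
      * pose proof (Ene _ Hep). pose proof (Ene _ Heq).
        destruct (fst ep) eqn:E1', (fst eq) eqn:E2'; try congruence. simpl in *.
        apply parallel_shift. apply E3.
        rewrite <- E1'; apply in_map; auto. rewrite <- E2'; apply in_map; auto. congruence.
    + intros x. unfold s'. destruct in_dec; auto.
    + intros x Hx. rewrite vars_Fun in Hx. simpl in Hx.
      rewrite Hs'r by (intro; apply Hx; apply in_or_app; auto).
      apply E5. rewrite vars_Fun. intro; apply Hx; apply in_or_app; auto.
    + rewrite mrep_app.
      rewrite apply_Fun. simpl map.
      rewrite mrep_cons0. simpl upd.
      replace (mrep dval qs0 (apply_subst s' l)) with u0.
      2: { rewrite D6. f_equal. apply subst_ext. intros; symmetry; auto. }
      replace (map (apply_subst s') ls') with (map (apply_subst s1') ls').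
      2: { apply map_ext_in. intros t Ht. apply subst_ext. intros x Hx. symmetry. apply Hs'r.
           intro Hxl. eapply Hdisj; eauto. apply in_flat_map; eauto. }
      symmetry. apply mrep_shift; auto.
  + intros e Hin. apply in_app_or in Hin as [Hin|Hin]; apply in_map_iff in Hin as [e' [<- He']]; simpl.
    * congruence.
    * specialize (Ene _ He'). destruct (fst e'); simpl; congruence.
Qed.

Lemma DEC B (l : term) : NoDup (vars l) -> forall (s : subst) u, par B (apply_subst s l) u ->
  exists qs s', DecP B l s u qs s'.
Proof.
  induction l as [x|f ls IH] using term_ind2; intros Hnd s u Hp.
  - exists [], (fun y => if veq y x then u else s y).
    split; [intros p rl th []|]. split; [constructor|]. split; [intros p q []|].
    split; [|split].
    + intros y. destruct (veq y x) as [->|]; auto using par_refl.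
    + intros y Hy. destruct (veq y x) as [->|]; auto. simpl in Hy; tauto.
    + simpl. destruct (veq x x); congruence.
  - rewrite apply_Fun in Hp. apply par_Fun_inv in Hp as [(us & -> & Hps)|(l0 & r0 & th & HB & Heq & ->)].
    + rewrite vars_Fun in Hnd. destruct (DECL f IH Hnd s Hps) as (qs & s' & H & _). eauto.
    + exists [([], ((l0, r0), th))], s.
      split; [|split; [|split; [|split; [|split]]]].
      * intros p rl th' [Hin|[]]. injection Hin as <- <- <-. split; auto.
        exists (Fun f ls). simpl. repeat split; eauto.
      * repeat constructor. intros [].
      * intros p q [<-|[]] [<-|[]]; congruence.
      * intros; apply par_refl.
      * auto.
      * unfold mrep. cbn [fold_left fst snd]. rewrite replace_nil. reflexivity.
Qed.

End Dec.

Section Unif.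
Context {F V : Type}.
Local Notation term := (term F V).
Local Notation subst := (subst F V).

Fixpoint size (t : term) : nat :=
  match t with
  | Var _ => 1
  | Fun _ ts => S ((fix go (l : list term) : nat :=
                     match l with [] => 0 | u :: l' => size u + go l' end) ts)
  end.

Lemma size_Fun f ts : size (Fun f ts) = S (list_sum (map size ts)).
Proof. simpl. f_equal. induction ts; simpl; auto. Qed.

Lemma size_pos (t : term) : 1 <= size t.
Proof. destruct t; simpl; lia. Qed.

Lemma size_le_sum (t : term) ts : In t ts -> size t <= list_sum (map size ts).
Proof. induction ts; simpl; [intros []|]. intros [->|H]; try lia. specialize (IHts H); lia. Qed.

Lemma size_occ (s : subst) x t : In x (vars t) -> size (s x) <= size (apply_subst s t).
Proof.
  induction t as [y|f ts IH] using term_ind2; intros Hx.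
  - simpl in Hx. destruct Hx as [->|[]]. simpl. lia.
  - rewrite vars_Fun in Hx. apply in_flat_map in Hx as [t [Ht Hx]].
    rewrite apply_Fun, size_Fun. rewrite Forall_forall in IH.
    pose proof (IH t Ht Hx). pose proof (size_le_sum (apply_subst s t) (map (apply_subst s) ts)).
    assert (In (apply_subst s t) (map (apply_subst s) ts)) by (apply in_map; auto).
    specialize (H0 H1). lia.
Qed.

Lemma size_occ_strict (s : subst) x t : In x (vars t) -> t <> Var x -> size (s x) < size (apply_subst s t).
Proof.
  destruct t as [y|f ts]; intros Hx Hne.
  - simpl in Hx. destruct Hx as [->|[]]; congruence.
  - rewrite vars_Fun in Hx. apply in_flat_map in Hx as [t [Ht Hx]].
    rewrite apply_Fun, size_Fun.
    pose proof (size_occ s x t Hx).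
    assert (In (apply_subst s t) (map (apply_subst s) ts)) by (apply in_map; auto).
    pose proof (size_le_sum _ _ H0). lia.
Qed.

Definition Eqs := list (term * term).
Definition unifE (E : Eqs) (s : subst) := forall a b, In (a, b) E -> apply_subst s a = apply_subst s b.
Definition mostgen (E : Eqs) (t : subst) :=
  forall s, unifE E s -> exists d : subst, forall x, s x = apply_subst d (t x).
Definition Pmgu (E : Eqs) := (exists s, unifE E s) -> exists t, unifE E t /\ mostgen E t.

Definition sizeE (E : Eqs) := list_sum (map (fun e => size (fst e) + size (snd e)) E).
Definition varsE (E : Eqs) := flat_map (fun e => vars (fst e) ++ vars (snd e)) E.
Definition nv (E : Eqs) := length (nodup veq (varsE E)).

Lemma nv_le E1 E2 : incl (varsE E1) (varsE E2) -> nv E1 <= nv E2.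
Proof.
  intros H. unfold nv. apply NoDup_incl_length. apply NoDup_nodup.
  intros x Hx. apply nodup_In. apply nodup_In in Hx. auto.
Qed.

Lemma nv_lt E1 E2 x : incl (varsE E1) (varsE E2) -> In x (varsE E2) -> ~ In x (varsE E1) -> nv E1 < nv E2.
Proof.
  intros H Hx Hn. unfold nv.
  apply Nat.le_lt_trans with (length (remove veq x (nodup veq (varsE E2)))).
  - apply NoDup_incl_length. apply NoDup_nodup.
    intros y Hy. apply nodup_In in Hy. apply in_in_remove.
    + intros ->. auto.
    + apply nodup_In. auto.
  - apply remove_length_lt. apply nodup_In. auto.
Qed.

Lemma unifE_cons a b E s : unifE ((a, b) :: E) s <-> apply_subst s a = apply_subst s b /\ unifE E s.
Proof.
  unfold unifE; simpl; split.
  - intros H; split; [apply H; left; reflexivity | intros a' b' Hi; apply H; right; exact Hi].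
  - intros [H1 H2] a' b' [Heq|Hin]; [injection Heq as <- <-|]; auto.
Qed.

Lemma Pmgu_swap a b E : Pmgu ((b, a) :: E) -> Pmgu ((a, b) :: E).
Proof.
  unfold Pmgu, mostgen. intros H [s Hs]. apply unifE_cons in Hs as [Hs1 Hs2].
  destruct H as [t [Ht H3]]. { exists s. apply unifE_cons. split; [symmetry|]; auto. }
  apply unifE_cons in Ht as [Ht1 Ht2].
  exists t. split. { apply unifE_cons; split; [symmetry|]; auto. }
  intros s' Hs'. apply H3. apply unifE_cons in Hs' as [? ?]. apply unifE_cons. split; [symmetry|]; auto.
Qed.

Lemma sizeE_swap a b E : sizeE ((a, b) :: E) = sizeE ((b, a) :: E).
Proof. unfold sizeE; simpl; lia. Qed.

Lemma varsE_cons a b E : varsE ((a, b) :: E) = vars a ++ vars b ++ varsE E.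
Proof. unfold varsE; simpl. rewrite app_assoc. reflexivity. Qed.

Lemma nv_swap a b E : nv ((a, b) :: E) = nv ((b, a) :: E).
Proof.
  apply Nat.le_antisymm; apply nv_le; rewrite !varsE_cons; intros y Hy;
    rewrite !in_app_iff in *; tauto.
Qed.

Definition sx (x : V) (b : term) : subst := fun y => if veq y x then b else Var y.

Lemma sx_notin x b t : ~ In x (vars t) -> apply_subst (sx x b) t = t.
Proof.
  intros H. rewrite <- (subst_id t) at 2. apply subst_ext. intros y Hy.
  unfold sx. destruct (veq y x); congruence.
Qed.

Lemma sx_absorb (s : subst) x b t : s x = apply_subst s b ->
  apply_subst s (apply_subst (sx x b) t) = apply_subst s t.
Proof.
  intros H. rewrite subst_comp. apply subst_ext. intros y _. unfold sx.
  destruct (veq y x) as [->|]; auto.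
Qed.

Lemma vars_sx x b t y : In y (vars (apply_subst (sx x b) t)) ->
  (In y (vars t) /\ y <> x) \/ In y (vars b).
Proof.
  intros H. apply vars_subst in H as [z [Hz Hy]]. unfold sx in Hy.
  destruct (veq z x) as [->|]; auto. simpl in Hy. destruct Hy as [->|[]]. left; auto.
Qed.

Lemma unif_combine ts us (s : subst) : length ts = length us ->
  (unifE (combine ts us) s <-> map (apply_subst s) ts = map (apply_subst s) us).
Proof.
  revert us; induction ts; intros [|u us] Hl; simpl in *; try discriminate.
  - split; auto. intros _ a b [].
  - injection Hl as Hl. change ((a, u) :: combine ts us) with ([(a, u)] ++ combine ts us).
    split.
    + intros H. f_equal. apply H; simpl; auto. apply IHts; auto. intros x y Hi. apply H. simpl; auto.
    + intros H. injection H as H1 H2. apply IHts in H2; auto. intros x y [Heq|Hi].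
      injection Heq as <- <-; auto. apply H2; auto.
Qed.

Lemma sizeE_combine ts us : length ts = length us ->
  sizeE (combine ts us) = list_sum (map size ts) + list_sum (map size us).
Proof.
  revert us; induction ts; intros [|u us] Hl; simpl in *; try discriminate; auto.
  injection Hl as Hl. unfold sizeE in *. simpl. rewrite IHts; auto. lia.
Qed.

Lemma sizeE_app E1 E2 : sizeE (E1 ++ E2) = sizeE E1 + sizeE E2.
Proof. unfold sizeE. rewrite map_app, list_sum_app. reflexivity. Qed.

Lemma varsE_combine ts us y : In y (varsE (combine ts us)) ->
  In y (flat_map (@vars F V) ts) \/ In y (flat_map (@vars F V) us).
Proof.
  revert us; induction ts; intros [|u us] H; simpl in *; auto.
  rewrite !in_app_iff in *. destruct H as [[H|H]|H]; auto.
  apply IHts in H as [H|H]; auto.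
Qed.

Lemma unify_exists : forall E, Pmgu E.
Proof.
  assert (Hmain : forall n E, nv E < n -> Pmgu E).
  2: { intros E. apply (Hmain (S (nv E))). lia. }
  induction n as [|n IHn]; intros E HE; [lia|].
  assert (Hin : forall m E, nv E < S n -> sizeE E < m -> Pmgu E).
  2: { apply (Hin (S (sizeE E))); auto. }
  clear E HE. induction m as [|m IHm]; intros E0 HE0 Hs0; [lia|].
  destruct E0 as [|[a b] E].
  { intros _. exists (@Var F V). split; [intros a b []|]. intros s _. exists s. reflexivity. }
  assert (Hvar : forall x c, nv ((Var x, c) :: E) < S n -> sizeE ((Var x, c) :: E) < S m ->
            Pmgu ((Var x, c) :: E)).
  { intros x c Hn1 Hm1 [s0 Hs0']. apply unifE_cons in Hs0' as [Hxc HE'].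
    destruct (classic (c = Var x)) as [->|Hne].
    - destruct (IHm E) as [t [Ht Hg]]; eauto.
      + eapply Nat.le_lt_trans; [|exact Hn1]. apply nv_le. rewrite varsE_cons. intros y Hy; rewrite !in_app_iff; auto.
      + unfold sizeE in *; simpl in Hm1. pose proof (size_pos (Var x : term)). lia.
      + exists t. split. apply unifE_cons; auto. intros s Hs. apply Hg. apply unifE_cons in Hs; tauto.
    - destruct (classic (In x (vars c))) as [Hocc|Hnocc].
      { exfalso. pose proof (size_occ_strict s0 Hocc Hne). simpl in Hxc. rewrite Hxc in H. lia. }
      set (E'' := map (fun e => (apply_subst (sx x c) (fst e), apply_subst (sx x c) (snd e))) E).
      assert (HuE : forall s, s x = apply_subst s c -> unifE E s -> unifE E'' s).
      { intros s Hsx Hs a' b' Hin. unfold E'' in Hin. apply in_map_iff in Hin as [[a0 b0] [Heq Hin]].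
        injection Heq as <- <-. simpl. rewrite !sx_absorb; auto. }
      assert (Hnv : nv E'' < n).
      { assert (nv E'' < nv ((Var x, c) :: E)); [|lia].
        apply nv_lt with x.
        - intros y Hy. unfold E'', varsE in Hy. apply in_flat_map in Hy as [[a0 b0] [Hin Hy]].
          apply in_map_iff in Hin as [[a1 b1] [Heq Hin]]. injection Heq as <- <-. simpl in Hy.
          rewrite varsE_cons. rewrite !in_app_iff.
          apply in_app_or in Hy as [Hy|Hy]; apply vars_sx in Hy as [[Hy _]|Hy]; auto;
            right; right; apply in_flat_map; exists (a1, b1); simpl; rewrite in_app_iff; auto.
        - rewrite varsE_cons. simpl. auto.
        - intros Hy. unfold E'', varsE in Hy. apply in_flat_map in Hy as [[a0 b0] [Hin Hy]].
          apply in_map_iff in Hin as [[a1 b1] [Heq Hin]]. injection Heq as <- <-. simpl in Hy.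
          apply in_app_or in Hy as [Hy|Hy]; apply vars_sx in Hy as [[_ Hy]|Hy]; auto. }
      destruct (IHn E'' Hnv) as [t [Ht Hg]]; [exists s0; apply HuE; auto|].
      exists (fun y => apply_subst t (sx x c y)). split.
      + apply unifE_cons. split.
        * simpl. unfold sx at 1. destruct (veq x x); [|congruence].
          rewrite <- subst_comp, sx_notin; auto.
        * intros a' b' Hin. rewrite <- !subst_comp. apply Ht. unfold E''.
          apply in_map_iff. exists (a', b'). auto.
      + intros s Hs. apply unifE_cons in Hs as [Hs1 Hs2]. simpl in Hs1.
        destruct (Hg s) as [d Hd]; [apply HuE; auto|].
        exists d. intros y. unfold sx. destruct (veq y x) as [->|].
        * rewrite Hs1. rewrite subst_comp. apply subst_ext. intros z _. apply Hd.
        * simpl. apply Hd. }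
  destruct a as [x|f ts].
  { apply Hvar; auto. }
  destruct b as [y|g us].
  { apply Pmgu_swap. apply Hvar. rewrite <- nv_swap; auto. rewrite <- sizeE_swap; auto. }
  intros [s0 Hs0']. apply unifE_cons in Hs0' as [Hfg HE'].
  simpl in Hfg. injection Hfg as <- Hmap.
  assert (Hlen : length ts = length us).
  { rewrite <- (length_map (apply_subst s0) ts), <- (length_map (apply_subst s0) us). congruence. }
  destruct (IHm (combine ts us ++ E)) as [t [Ht Hg]].
  - eapply Nat.le_lt_trans; [|exact HE0]. apply nv_le. intros z Hz.
    unfold varsE in Hz. rewrite flat_map_app in Hz. apply in_app_or in Hz as [Hz|Hz].
    + rewrite varsE_cons, !vars_Fun. rewrite !in_app_iff. apply varsE_combine in Hz. tauto.
    + rewrite varsE_cons, !in_app_iff. auto.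
  - rewrite sizeE_app, sizeE_combine by auto. unfold sizeE in Hs0 |- *.
    cbn [map fst snd] in Hs0. rewrite !size_Fun in Hs0. simpl list_sum in Hs0. lia.
  - exists s0. intros a b Hin. apply in_app_or in Hin as [Hin|Hin].
    + apply (proj2 (@unif_combine ts us s0 Hlen)); auto.
    + apply HE'; auto.
  - exists t. split.
    + apply unifE_cons. split.
      * simpl. f_equal. apply unif_combine; auto. intros a b Hin. apply Ht. apply in_or_app; auto.
      * intros a b Hin. apply Ht. apply in_or_app; auto.
    + intros s Hs. apply unifE_cons in Hs as [Hs1 Hs2]. apply Hg.
      simpl in Hs1. injection Hs1 as Hs1.
      intros a b Hin. apply in_app_or in Hin as [Hin|Hin].
      * apply (proj2 (@unif_combine ts us s Hlen)); auto.
      * apply Hs2; auto.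
Qed.

End Unif.

Section Ren.
Context {F V : Type}.
Local Notation term := (term F V).
Local Notation subst := (subst F V).

Lemma fresh_gen (g : nat -> V) (Hg : forall m n, g m = g n -> m = n) :
  forall (A : list V) k, exists n, k <= n /\ ~ In (g n) A.
Proof.
  induction A as [|a A IH]; intros k.
  - exists k; split; auto.
  - destruct (IH k) as [n1 [H1 H2]].
    destruct (veq (g n1) a) as [He|Hne].
    + destruct (IH (S n1)) as [n2 [H3 H4]]. exists n2. split; [lia|].
      intros [Ha|Ha]; auto. rewrite <- He in Ha. apply Hg in Ha. lia.
    + exists n1. split; auto. intros [Ha|Ha]; auto.
Qed.

Definition swap (a b x : V) : V := if veq x a then b else if veq x b then a else x.

Lemma swap_invol a b x : swap a b (swap a b x) = x.
Proof.
  unfold swap. repeat (destruct veq; subst; auto; try congruence).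
Qed.

Lemma renaming_swap a b : renaming (swap a b).
Proof. exists (swap a b). split; intros; apply swap_invol. Qed.

Lemma renaming_comp (p1 p2 : V -> V) : renaming p1 -> renaming p2 -> renaming (fun x => p2 (p1 x)).
Proof.
  intros [i1 [H1 H1']] [i2 [H2 H2']]. exists (fun x => i1 (i2 x)). split; intros x.
  - rewrite H2. auto.
  - rewrite H1'. auto.
Qed.

Lemma renaming_inj (p : V -> V) : renaming p -> forall x y, p x = p y -> x = y.
Proof. intros [i [H1 _]] x y H. rewrite <- (H1 x), <- (H1 y). congruence. Qed.

Lemma rename_avoid (g : nat -> V) (Hg : forall m n, g m = g n -> m = n) :
  forall (L avoid : list V), exists pi, renaming pi /\ forall x, In x L -> ~ In (pi x) avoid.
Proof.
  intros L avoid. induction L as [|x L IH].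
  - exists (fun x => x). split; [exists (fun x => x); auto|]. intros _ [].
  - destruct IH as [pi [Hpi Hav]].
    destruct (classic (In (pi x) avoid)) as [Hin|Hnin].
    + destruct (fresh_gen g Hg (avoid ++ map pi L ++ [pi x]) 0) as [n [_ Hn]].
      set (y := g n) in *.
      exists (fun z => swap (pi x) y (pi z)). split.
      * apply renaming_comp; auto. apply renaming_swap.
      * assert (Hyx : y <> pi x) by (intro; apply Hn; rewrite !in_app_iff; simpl; auto).
        intros z [<-|Hz].
        -- unfold swap. destruct veq; [|congruence]. intro; apply Hn; apply in_app_iff; auto.
        -- destruct (veq z x) as [->|Hzx].
           ++ unfold swap. destruct veq; [|congruence]. intro; apply Hn; apply in_app_iff; auto.
           ++ unfold swap. destruct veq as [He|]. { apply (renaming_inj Hpi) in He. congruence. }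
              destruct veq as [He|]. { exfalso; apply Hn. rewrite <- He. rewrite !in_app_iff.
                                       right; left. apply in_map; auto. }
              auto.
    + exists pi. split; auto. intros z [<-|Hz]; auto.
Qed.

Definition ren (pi : V -> V) (rl : rule F V) : rule F V :=
  (apply_subst (fun x => Var (pi x)) (fst rl), apply_subst (fun x => Var (pi x)) (snd rl)).

Lemma rule_vars_ren pi rl : rule_vars (ren pi rl) = map pi (rule_vars rl).
Proof. unfold rule_vars, ren; simpl. rewrite !vars_rename, map_app. reflexivity. Qed.

Definition PWD (ps : list (pos * rule F V)) :=
  forall p q a b, In (p, a) ps -> In (q, b) ps -> p <> q -> var_disjoint a b.

Lemma var_disjoint_sym (a b : rule F V) : var_disjoint a b -> var_disjoint b a.
Proof. unfold var_disjoint. intros H x H1 H2. eapply H; eauto. Qed.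

Lemma Forall2_impl_in {A B} (P Q : A -> B -> Prop) l1 l2 :
  Forall2 P l1 l2 -> (forall a b, In b l2 -> P a b -> Q a b) -> Forall2 Q l1 l2.
Proof. induction 1; intros H'; constructor; simpl in *; auto. Qed.

Definition RelE (R : trs F V) (rho : subst) (e : pos * (rule F V * subst)) (pr : pos * rule F V) : Prop :=
  fst e = fst pr /\ variant_of R (snd pr) /\
  apply_subst rho (fst (snd pr)) = apply_subst (snd (snd e)) (fst (fst (snd e))) /\
  apply_subst rho (snd (snd pr)) = apply_subst (snd (snd e)) (snd (fst (snd e))).

Lemma RENAME (R : trs F V) (g : nat -> V) (Hg : forall m n, g m = g n -> m = n) :
  forall (qs : list (pos * (rule F V * subst))) (avoid : list V) (base : subst),
  (forall p rl th, In (p, (rl, th)) qs -> R rl) ->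
  exists (ps : list (pos * rule F V)) (rho : subst),
    Forall2 (RelE R rho) qs ps /\
    (forall p rl, In (p, rl) ps -> forall x, In x (rule_vars rl) -> ~ In x avoid) /\
    PWD ps /\
    (forall x, In x avoid -> rho x = base x).
Proof.
  intros qs avoid base. induction qs as [|[p [rl th]] qs IH]; intros HR.
  - exists [], base. split; [constructor|]. split; [intros _ _ []|]. split; [intros ? ? ? ? []|]. auto.
  - destruct IH as (ps & rho' & H1 & H2 & H3 & H4). { intros; eapply HR; simpl; eauto. }
    set (AV := avoid ++ flat_map (fun pr => rule_vars (snd pr)) ps).
    destruct (rename_avoid g Hg (rule_vars rl) AV) as (pi & Hpi & Hav).
    destruct Hpi as [pinv [Hp1 Hp2]].
    set (rl' := ren pi rl).
    set (rho := fun x => if in_dec veq x (rule_vars rl') then th (pinv x) else rho' x).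
    assert (Hrl' : forall x, In x (rule_vars rl') -> ~ In x AV).
    { intros x Hx. unfold rl' in Hx. rewrite rule_vars_ren in Hx.
      apply in_map_iff in Hx as [z [<- Hz]]. auto. }
    assert (Hren : forall t, incl (vars t) (rule_vars rl) ->
               apply_subst rho (apply_subst (fun x => Var (pi x)) t) = apply_subst th t).
    { intros t Ht. rewrite subst_comp. apply subst_ext. intros y Hy. simpl. unfold rho.
      destruct in_dec as [_|Hn]. rewrite Hp1; auto.
      exfalso. apply Hn. unfold rl'. rewrite rule_vars_ren. apply in_map; auto. }
    exists ((p, rl') :: ps), rho. split; [|split; [|split]].
    + constructor.
      * unfold RelE; simpl. split; auto. split.
        -- exists rl. split. eapply HR; simpl; eauto. exists pi. split; [exists pinv; auto|]. auto.
        -- split; apply Hren; unfold rule_vars; intros y Hy; apply in_or_app; auto.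
      * eapply Forall2_impl_in; eauto. intros e pr Hin [E1 [E2 [E3 E4]]]. split; auto. split; auto.
        assert (Hag : forall t, incl (vars t) (rule_vars (snd pr)) -> apply_subst rho t = apply_subst rho' t).
        { intros t Ht. apply subst_ext. intros y Hy. unfold rho. destruct in_dec as [Hi|]; auto.
          exfalso. apply (Hrl' y Hi). unfold AV. apply in_or_app; right. apply in_flat_map. eauto. }
        rewrite !Hag; auto; unfold rule_vars; intros y Hy; apply in_or_app; auto.
    + intros p0 rl0 [Heq|Hin] x Hx.
      * injection Heq as <- <-. intro; apply (Hrl' x Hx). unfold AV; apply in_or_app; auto.
      * eapply H2; eauto.
    + intros p1 q1 a b Ha Hb Hpq. destruct Ha as [Ha|Ha]; destruct Hb as [Hb|Hb].
      * injection Ha as <- <-. injection Hb as <- <-. congruence.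
      * injection Ha as <- <-. intros x Hx Hx'. apply (Hrl' x Hx). unfold AV; apply in_or_app; right.
        apply in_flat_map. exists (q1, b). auto.
      * injection Hb as <- <-. apply var_disjoint_sym. intros x Hx Hx'. apply (Hrl' x Hx).
        unfold AV; apply in_or_app; right. apply in_flat_map. exists (p1, a). auto.
      * eapply H3; eauto.
    + intros x Hx. unfold rho. destruct in_dec as [Hi|].
      * exfalso. apply (Hrl' x Hi). unfold AV; apply in_or_app; auto.
      * auto.
Qed.

End Ren.

Section Main.
Context {F V : Type}.
Local Notation term := (term F V).
Local Notation subst := (subst F V).
Context (g : nat -> V) (Hg : forall m n, g m = g n -> m = n).
Context (R C : trs F V) (HR : is_trs R) (HLL : left_linear R) (HCR : sub_trs C R)
        (HCc : confluent C) (Hpcp : forall t u, pcp R R t u -> conv C t u).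

Lemma Forall2_in_r {A B} (P : A -> B -> Prop) l1 l2 b :
  Forall2 P l1 l2 -> In b l2 -> exists a, In a l1 /\ P a b.
Proof.
  induction 1; simpl; [intros []|]. intros [<-|Hin]; [eauto|].
  destruct (IHForall2 Hin) as [a [H1 H2]]; eauto.
Qed.

Lemma Forall2_map_fst {A B} (P : (pos * A) -> (pos * B) -> Prop) l1 l2 :
  Forall2 P l1 l2 -> (forall a b, P a b -> fst a = fst b) -> map fst l1 = map fst l2.
Proof. induction 1; simpl; intros H'; f_equal; auto. Qed.

Lemma Forall2_single {A B} (P : A -> B -> Prop) l1 b :
  Forall2 P l1 [b] -> exists a, l1 = [a] /\ P a b.
Proof. intros H. inversion H; subst. inversion H4; subst. eauto. Qed.

Definition lsubof (l : term) (p : pos) : term :=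
  match subterm_at l p with Some t => t | None => l end.

Lemma unifies_E (l : term) (ps : list (pos * rule F V)) :
  (forall p rl, In (p, rl) ps -> subterm_at l p <> None) ->
  forall tau, unifies l ps tau <-> unifE (map (fun pr => (fst (snd pr), lsubof l (fst pr))) ps) tau.
Proof.
  intros Hv tau. unfold unifies, unifE. split.
  - intros H a b Hin. apply in_map_iff in Hin as [[p rl] [Heq Hin]]. injection Heq as <- <-.
    destruct (H p rl Hin) as [lsub [H1 H2]]. unfold lsubof. simpl. rewrite H1. auto.
  - intros H p rl Hin. specialize (Hv p rl Hin). unfold lsubof in H.
    destruct (subterm_at l p) as [lsub|] eqn:E; [|congruence].
    exists lsub. split; auto. apply (H (fst rl) lsub). apply in_map_iff. exists (p, rl). simpl. rewrite E. auto.
Qed.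

Lemma OL (A B : trs F V) : sub_trs A R -> sub_trs B R ->
  forall l r (s : subst) u, A (l, r) -> par B (apply_subst s l) u ->
  exists t' u', par B (apply_subst s r) t' /\ par A u u' /\ conv C t' u'.
Proof.
  intros HAR HBR l r s u HA Hp.
  assert (HRl : R (l, r)) by (apply HAR; auto).
  destruct (DEC l (HLL HRl) s Hp) as (qs & s' & D1 & D2 & D3 & D4 & D5 & D6).
  destruct qs as [|e0 qs0] eqn:Eqs.
  { unfold mrep in D6; simpl in D6. subst u.
    exists (apply_subst s' r), (apply_subst s' r). split; [|split].
    - apply par_subst; auto.
    - apply par_root; auto.
    - apply rst_refl. }
  rewrite <- Eqs in *.
  destruct (RENAME R g Hg qs (rule_vars (l, r)) s') as (ps & rho & HF2 & Hav & Hpwd & Hbase).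
  { intros p rl th Hin. apply HBR. eapply D1; eauto. }
  assert (Hrho : forall t, incl (vars t) (rule_vars (l, r)) -> apply_subst rho t = apply_subst s' t).
  { intros t Ht. apply subst_ext. intros x Hx. apply Hbase. auto. }
  assert (Hrl : apply_subst rho l = apply_subst s' l).
  { apply Hrho. unfold rule_vars; intros y Hy; apply in_or_app; auto. }
  assert (Hrr : apply_subst rho r = apply_subst s' r).
  { apply Hrho. unfold rule_vars; intros y Hy; apply in_or_app; auto. }
  assert (Hfst : map fst qs = map fst ps).
  { eapply Forall2_map_fst; eauto. intros a b [H _]; auto. }
  assert (Hinfo : forall p rl, In (p, rl) ps -> exists rl0 th,
      In (p, (rl0, th)) qs /\ variant_of R rl /\
      apply_subst rho (fst rl) = apply_subst th (fst rl0) /\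
      apply_subst rho (snd rl) = apply_subst th (snd rl0)).
  { intros p rl Hin. destruct (@Forall2_in_r _ _ _ _ _ _ HF2 Hin) as [[p' [rl0 th]] [Hin' [E1 [E2 [E3 E4]]]]].
    simpl in *. subst p'. eauto 7. }
  assert (Hun : unifies l ps rho).
  { intros p rl Hin. destruct (Hinfo p rl Hin) as (rl0 & th & Hin' & _ & E3 & _).
    destruct (D1 _ _ _ Hin') as [_ (lsub & Hsub & _ & Heq & Hx)].
    exists lsub. split; auto. rewrite E3, <- Heq.
    transitivity (apply_subst s' lsub).
    - apply subst_ext. intros x Hxl. symmetry; auto.
    - symmetry. apply Hrho. intros y Hy. apply in_or_app. left. eapply subterm_vars; eauto. }
  assert (Hvalid : forall p rl, In (p, rl) ps -> subterm_at l p <> None).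
  { intros p rl Hin. destruct (Hinfo p rl Hin) as (rl0 & th & Hin' & _).
    destruct (D1 _ _ _ Hin') as [_ (lsub & Hsub & _)]. congruence. }
  destruct (@unify_exists F V (map (fun pr => (fst (snd pr), lsubof l (fst pr))) ps)) as [tau [Htau Hmg]].
  { exists rho. apply unifies_E; auto. }
  assert (Hmgu : is_mgu l ps tau).
  { split. apply unifies_E; auto. intros tau' Ht'. apply Hmg. apply unifies_E; auto. }
  destruct (Hmg rho) as [d Hd]. { apply unifies_E; auto. }
  assert (Hcomp : forall t, apply_subst d (apply_subst tau t) = apply_subst rho t).
  { intros t. rewrite subst_comp. apply subst_ext. intros x _. symmetry. apply Hd. }
  destruct (classic (exists rl', ps = [([], rl')] /\ variant rl' (l, r))) as [Hroot|Hnroot].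
  - destruct Hroot as (rl' & Hps & pi & Hpi & Hl & Hr). simpl in Hl, Hr.
    rewrite Hps in HF2. apply Forall2_single in HF2 as [e1 [Hq1 Hrel]].
    destruct e1 as [p1 [rl0 th]]. destruct Hrel as (E1 & E2 & E3 & E4). cbn [fst snd] in E1, E2, E3, E4. subst p1.
    assert (Hu : u = apply_subst th (snd rl0)).
    { rewrite D6, Hq1. unfold mrep; cbn [fold_left fst snd]. rewrite replace_nil. reflexivity. }
    rewrite Hps in Hun.
    assert (Hagree : forall x, In x (vars (fst rl')) -> rho (pi x) = rho x).
    { destruct (Hun [] rl') as [lsub [Hsub Heq]]; [simpl; auto|]. simpl in Hsub. injection Hsub as <-.
      rewrite Hl, subst_comp in Heq. intros x Hx. symmetry.
      exact (subst_ext_inv _ _ _ Heq x Hx). }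
    assert (Hinc : incl (vars (snd rl')) (vars (fst rl'))).
    { destruct E2 as [rl'' [HR'' [pi2 [_ [F1 F2]]]]]. rewrite F1, F2, !vars_rename.
      intros y Hy. apply in_map_iff in Hy as [z [<- Hz]]. apply in_map.
      destruct rl'' as [l'' r'']. apply (proj2 (HR HR'')); auto. }
    assert (Heqr : apply_subst rho r = apply_subst rho (snd rl')).
    { rewrite Hr, subst_comp. apply subst_ext. intros x Hx. apply Hagree. auto. }
    exists (apply_subst s' r), u. split; [|split].
    + apply par_subst; auto.
    + apply par_refl.
    + rewrite Hu, <- E4, <- Heqr, Hrr. apply rst_refl.
  - assert (Hpc : pcp R R (multi_replace tau (apply_subst tau l) ps) (apply_subst tau r)).
    { exists l, r, ps, tau.
      split; [|split; [|split; [|split; [|split; [|split; [|split; [|split; [|split; [|split; [|split]]]]]]]]]].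
      - exists (l, r). split; auto. exists (fun x => x). split; [exists (fun x => x); auto|].
        simpl. split; symmetry; apply subst_id.
      - intros ->. inversion HF2. congruence.
      - rewrite <- Hfst. auto.
      - intros p Hp'. rewrite <- Hfst in Hp'. apply in_map_iff in Hp' as [[p0 [rl0 th]] [<- Hin]].
        destruct (D1 _ _ _ Hin) as [_ (lsub & Hsub & [f [ts ->]] & _)]. exists f, ts. auto.
      - rewrite <- Hfst. auto.
      - intros p rl Hin. destruct (Hinfo p rl Hin) as (? & ? & _ & ? & _). auto.
      - intros p rl Hin. exact (Hav p rl Hin).
      - intros p q rlp rlq H1 H2 H3. eapply Hpwd; eauto.
      - auto.
      - intros rl Hps Hv. apply Hnroot. eauto.
      - reflexivity.
      - reflexivity. }
    apply Hpcp in Hpc. apply (conv_subst d) in Hpc.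
    rewrite multi_replace_mrep, mrep_subst in Hpc.
    + rewrite !Hcomp in Hpc. rewrite Hrr, Hrl in Hpc.
      assert (Hu : u = mrep (fun a => apply_subst d (apply_subst tau (snd a))) ps (apply_subst s' l)).
      { rewrite D6. apply mrep_F2. eapply Forall2_impl_in; eauto.
        intros [p0 [rl0 th]] [p1 rl1] _ (E1 & _ & _ & E4). simpl in *. split; auto.
        rewrite Hcomp, E4. reflexivity. }
      rewrite <- Hu in Hpc.
      exists (apply_subst s' r), u. split; [|split].
      * apply par_subst; auto.
      * apply par_refl.
      * apply rst_sym; auto.
    + intros p a Hin. destruct (subterm_at l p) as [t0|] eqn:E.
      * rewrite (subterm_subst tau l p E). congruence.
      * exfalso. eapply Hvalid; eauto.
    + pose proof D2 as D2'. rewrite Hfst in D2'. exact D2'.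
    + pose proof D3 as D3'. rewrite Hfst in D3'. exact D3'.
Qed.

Lemma KL (A B : trs F V) : sub_trs A R -> sub_trs B R ->
  forall s t, par A s t -> forall u, par B s u ->
  exists t' u', par B t t' /\ par A u u' /\ conv C t' u'.
Proof.
  intros HAR HBR.
  apply (@par_mut F V A (fun s t _ => forall u, par B s u ->
                        exists t' u', par B t t' /\ par A u u' /\ conv C t' u')
                    (fun ts ts' _ => forall us, pars B ts us ->
                        exists ts'' us'', pars B ts' ts'' /\ pars A us us'' /\ Forall2 (conv C) ts'' us'')).
  - intros x u Hu. exists u, u. split; auto. split; [apply par_refl|apply rst_refl].
  - intros f ts ts' Hps IH u Hu. apply par_Fun_inv in Hu as [(us & -> & Hus)|(l0 & r0 & th & HB0 & Heq & ->)].
    + destruct (IH us Hus) as (ts'' & us'' & H1 & H2 & H3).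
      exists (Fun f ts''), (Fun f us''). split; [constructor; auto|split; [constructor; auto|]].
      apply conv_args; auto.
    + assert (HpA : par A (apply_subst th l0) (Fun f ts')) by (rewrite <- Heq; constructor; auto).
      destruct (OL HBR HAR l0 r0 th HB0 HpA) as (t'' & u'' & H1 & H2 & H3).
      exists u'', t''. split; auto. split; auto. apply rst_sym; auto.
  - intros l r sg HA u Hu. exact (OL HAR HBR l r sg HA Hu).
  - intros us Hus. inversion Hus; subst. exists [], []. repeat constructor.
  - intros t u ts us Hp IHp Hps IHps us0 Hus0. inversion Hus0 as [|t1 u1 ts1 us1 Hp1 Hps1]; subst.
    destruct (IHp u1 Hp1) as (t' & u' & H1 & H2 & H3).
    destruct (IHps us1 Hps1) as (ts' & us' & H4 & H5 & H6).
    exists (t' :: ts'), (u' :: us'). split; [constructor; auto|split; [constructor; auto|constructor; auto]].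
Qed.

Lemma subR : sub_trs R R.
Proof. intros rl H; auto. Qed.

Lemma strip_C : forall s t, rsteps C s t -> forall u, par R s u -> exists w, par R t w /\ conv C w u.
Proof.
  intros s t H. apply clos_rt_rt1n in H. induction H as [s|s s1 t Hst Hrest IH]; intros u Hu.
  - exists u. split; auto. apply rst_refl.
  - destruct (KL HCR subR (rstep_par Hst) Hu) as (t'' & u'' & H1 & H2 & H3).
    destruct (IH t'' H1) as (w & Hw1 & Hw2). exists w. split; auto.
    eapply rst_trans; [exact Hw2|]. eapply rst_trans; [exact H3|].
    apply rst_sym. apply rsteps_conv. apply par_rsteps; auto.
Qed.

Lemma CR_C : forall a b, conv C a b -> exists c, rsteps C a c /\ rsteps C b c.
Proof.
  induction 1 as [a b H|a|a b H IH|a b c H1 IH1 H2 IH2].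
  - exists b. split; [apply rt_step; auto|apply rt_refl].
  - exists a. split; apply rt_refl.
  - destruct IH as [c [H1 H2]]. eauto.
  - destruct IH1 as [x [Hx1 Hx2]]. destruct IH2 as [y [Hy1 Hy2]].
    destruct (HCc Hx2 Hy1) as [z [Hz1 Hz2]].
    exists z. split; eapply rt_trans; eauto.
Qed.

Definition gam (a c : term) : Prop := exists b, par R a b /\ rsteps C b c.

Lemma gam_diamond : forall s t u, gam s t -> gam s u -> exists v, gam t v /\ gam u v.
Proof.
  intros s t u (s1 & Hs1 & Ht) (s2 & Hs2 & Hu).
  destruct (KL subR subR Hs1 Hs2) as (a & b & Ha & Hb & Hab).
  destruct (strip_C Ht Ha) as (a' & Ha'1 & Ha'2).
  destruct (strip_C Hu Hb) as (b' & Hb'1 & Hb'2).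
  assert (Hc : conv C a' b').
  { eapply rst_trans; [exact Ha'2|]. eapply rst_trans; [exact Hab|]. apply rst_sym; auto. }
  destruct (CR_C Hc) as (c & Hc1 & Hc2).
  exists c. split; [exists a'|exists b']; auto.
Qed.

Lemma gam_strip : forall s t u, gam s t -> clos_refl_trans _ gam s u ->
  exists v, clos_refl_trans _ gam t v /\ gam u v.
Proof.
  intros s t u H1 H2. apply clos_rt_rt1n in H2. revert t H1.
  induction H2 as [s|s s1 u Hs Hrest IH]; intros t H1.
  - exists t. split; auto. apply rt_refl.
  - destruct (gam_diamond H1 Hs) as (v1 & Hv1 & Hv2).
    destruct (IH v1 Hv2) as (v & Hv & Huv). exists v. split; auto.
    eapply rt_trans; [apply rt_step; exact Hv1|exact Hv].
Qed.

Lemma gam_confluent : forall s t u, clos_refl_trans _ gam s t -> clos_refl_trans _ gam s u ->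
  exists v, clos_refl_trans _ gam t v /\ clos_refl_trans _ gam u v.
Proof.
  intros s t u H1. apply clos_rt_rt1n in H1. revert u.
  induction H1 as [s|s s1 t Hs Hrest IH]; intros u H2.
  - exists u. split; auto. apply rt_refl.
  - destruct (gam_strip Hs H2) as (v1 & Hv1 & Hv2).
    destruct (IH v1 Hv1) as (v & H3 & H4). exists v. split; auto.
    eapply rt_trans; [apply rt_step; exact Hv2|exact H4].
Qed.

Lemma rsteps_gam : forall a b, rsteps R a b -> clos_refl_trans _ gam a b.
Proof.
  induction 1.
  - apply rt_step. exists y. split; [apply rstep_par; auto|apply rt_refl].
  - apply rt_refl.
  - eapply rt_trans; eauto.
Qed.

Lemma gam_rsteps : forall a b, clos_refl_trans _ gam a b -> rsteps R a b.
Proof.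
  induction 1.
  - destruct H as (b & H1 & H2). eapply rt_trans.
    apply par_rsteps; eauto. eapply rsteps_mono; eauto.
  - apply rt_refl.
  - eapply rt_trans; eauto.
Qed.

Lemma R_confluent : confluent R.
Proof.
  intros s t u H1 H2. apply rsteps_gam in H1, H2.
  destruct (gam_confluent H1 H2) as (v & H3 & H4).
  exists v. split; apply gam_rsteps; auto.
Qed.

End Main.

Unset Implicit Arguments.

Theorem theorem8 (F V : Type)
  (V_infinite : exists g : nat -> V, forall m n, g m = g n -> m = n)
  (R : trs F V) :
  is_trs R -> left_linear R ->
  (exists C : trs F V,
      sub_trs C R /\ confluent C /\
      (forall t u, pcp R R t u -> conv C t u)) ->
  confluent R.
Proof.
  intros HR HLL [C [HCR [HCc Hpcp]]].
  destruct V_infinite as [g Hg].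
  eapply R_confluent; eauto.
Qed.
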